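(* Let $n\ge1$, $b\ge1$. For $0\le i,j\le n$: (1) the transition probabilities of the type $B$ base-$(2b+1)$ carries chain are $$P(i,j)=\frac1{(2b+1)^n}\sum_{l\ge0}(-1)^l\binom{n+1}{l}\binom{n+(j-l)(2b+1)+b-i}{n};$$ (2) its $r$-step transition probabilities ($r\ge1$) are $$P^r(i,j)=\frac1{(2b+1)^{rn}}\sum_{l\ge0}(-1)^l\binom{n+1}{l}\binom{n+(j-l)(2b+1)^r+\frac{(2b+1)^r-1}{2}-i}{n}.$$
   Context: Binomial convention: $\binom{m}{n}=\frac{m(m-1)\cdots(m-n+1)}{n!}$ if $m\ge n$ and $\binom{m}{n}=0$ if $m<n$ (including negative $m$). The type $B$ base-$(2b+1)$ carries chain (for $n$ summands) is the Markov chain $\kappa_0=0,\kappa_1,\dots$ on $\{0,1,\dots,n\}$ obtained by adding $n$ random base-$(2b+1)$ numbers with i.i.d. digits uniform on $\{0,1,\dots,2b\}$ together with the number all of whose digits equal $b$: $\kappa_{t+1}=\lfloor(\kappa_t+b+X_{t+1,1}+\dots+X_{t+1,n})/(2b+1)\rfloor$ with $X_{t,k}$ i.i.d. uniform on $\{0,\dots,2b\}$. *)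

(* Defs.v *)
From HB Require Import structures.
From mathcomp Require Import all_boot all_order all_algebra.
Set Implicit Arguments. Unset Strict Implicit. Unset Printing Implicit Defensive.
Import Order.TTheory GRing.Theory Num.Theory.

(* Generalized binomial with the paper's convention:
   binom m k = m(m-1)...(m-k+1)/k! if m >= k, and 0 if m < k (incl. m < 0). *)
Definition binomZ (m : int) (k : nat) : int :=
  match m with
  | Posz m' => ('C(m', k))%:Z
  | Negz _ => 0
  end.

(* One step of the type B base-(2b+1) carries chain with n summands:
   from carry i, add b and n i.i.d. uniform digits in {0,...,2b}, new carry
   is floor of the sum divided by 2b+1.  The transition probability is the
   number of digit vectors leading to j divided by (2b+1)^n. *)
Definition carriesB_count (n b : nat) (i j : nat) : nat :=
  #|[set x : {ffun 'I_n -> 'I_(2*b).+1} |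
      (i + b + \sum_(k < n) (x k : nat)) %/ (2*b).+1 == j]|.

Definition carriesB_P (n b : nat) : 'M[rat]_(n.+1) :=
  \matrix_(i < n.+1, j < n.+1)
    (((carriesB_count n b i j)%:R / ((2*b).+1 ^ n)%:R)%R).

(* Main.v *)
Require Import Defs.
From HB Require Import structures.
From mathcomp Require Import all_boot all_order all_algebra.
From Stdlib Require Import Lia Psatz Ring.
Import Order.TTheory GRing.Theory Num.Theory.
Local Open Scope ring_scope.

Fixpoint T (m n : nat) (g : nat -> int) : int :=
  match n with
  | 0 => g 0%N
  | n'.+1 => \sum_(d < m) T m n' (fun s => g (d + s)%N)
  end.

Lemma S_rec (m n : nat) (g : nat -> int) :
  \sum_(x : {ffun 'I_n.+1 -> 'I_m}) g (\sum_k (x k : nat))%N =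
  \sum_(d < m) \sum_(y : {ffun 'I_n -> 'I_m}) g (d + \sum_k (y k : nat))%N.
Proof.
rewrite pair_big /=.
pose f (p : 'I_m * {ffun 'I_n -> 'I_m}) : {ffun 'I_n.+1 -> 'I_m} :=
  [ffun k => match unlift ord0 k with None => p.1 | Some k' => p.2 k' end].
pose h (x : {ffun 'I_n.+1 -> 'I_m}) := (x ord0, [ffun k => x (lift ord0 k)]).
rewrite (reindex f) /=; last first.
  exists h => [[d y] _|x _]; rewrite /f /h /=.
    congr pair; first by rewrite ffunE unlift_none.
    by apply/ffunP => k; rewrite !ffunE liftK.
  apply/ffunP => k; rewrite ffunE; case: unliftP => [k'|] -> //.
  by rewrite ffunE.
apply: eq_bigr => -[d y] _ /=; congr g.
rewrite big_ord_recl /f ffunE unlift_none /=; congr addn.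
by apply: eq_bigr => k _; rewrite ffunE liftK.
Qed.

Lemma S_T (m n : nat) (g : nat -> int) :
  \sum_(x : {ffun 'I_n -> 'I_m}) g (\sum_k (x k : nat))%N = T m n g.
Proof.
elim: n g => [|n IH] g.
  under eq_bigr do rewrite big_ord0.
  by rewrite sumr_const card_ffun !card_ord expn0.
rewrite S_rec /=; apply: eq_bigr => d _; exact: IH.
Qed.

Lemma card_T (m n : nat) (P : pred nat) :
  (#|[set x : {ffun 'I_n -> 'I_m} | P (\sum_k (x k : nat))%N]|)%:Z =
  T m n (fun s => (P s)%:Z).
Proof.
rewrite -S_T -sum1_card -natz natr_sum big_mkcond /=.
by apply: eq_bigr => x _; rewrite inE; case: (P _).
Qed.

Lemma T_sum (m n : nat) (I : Type) (r : seq I) (P : pred I) (f : I -> nat -> int) :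
  T m n (fun s => \sum_(i <- r | P i) f i s) = \sum_(i <- r | P i) T m n (f i).
Proof.
elim: n f => [|n IH] f //=.
rewrite exchange_big /=; apply: eq_bigr => d _.
exact: (IH (fun i s => f i (d + s)%N)).
Qed.

Lemma T_scal (m n : nat) (a : int) (g : nat -> int) :
  T m n (fun s => a * g s) = a * T m n g.
Proof.
elim: n g => [|n IH] g //=.
rewrite mulr_sumr; apply: eq_bigr => d _; exact: IH.
Qed.

Lemma T_sub (m n : nat) (g h : nat -> int) :
  T m n (fun s => g s - h s) = T m n g - T m n h.
Proof.
elim: n g h => [|n IH] g h //=.
rewrite -sumrB; apply: eq_bigr => d _; exact: IH.
Qed.

Lemma T_eq (m n : nat) (g h : nat -> int) :
  (forall s, (s <= n * m.-1)%N -> g s = h s) -> T m n g = T m n h.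
Proof.
elim: n g h => [|n IH] g h H /=; first by apply: H.
apply: eq_bigr => d _; apply: IH => s Hs; apply: H.
rewrite mulSn; apply: leq_add => //.
have m0 : (0 < m)%N by apply: leq_ltn_trans (leq0n d) (ltn_ord d).
by rewrite -ltnS prednK.
Qed.

Lemma sum_index (m1 m2 : nat) (phi : nat -> int) :
  \sum_(d < m1) \sum_(e < m2) phi (d + m1 * e)%N = \sum_(f < m1 * m2) phi f.
Proof.
elim: m2 => [|m2 IH]; first by rewrite muln0 big_ord0; under eq_bigr do rewrite big_ord0; rewrite big1.
under eq_bigr do rewrite big_ord_recr /=.
rewrite big_split /= IH -!(big_mkord xpredT) mulnS addnC.
rewrite (big_cat_nat _ (leq_addr m1 (m1 * m2))) //=; congr (_ + _).
rewrite -{2}[(m1 * m2)%N]add0n big_addn addKn big_mkord.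
by apply: eq_bigr => i _; rewrite addnC.
Qed.

Lemma T_mulm (m1 m2 n : nat) (g : nat -> int) :
  T m1 n (fun s => T m2 n (fun s' => g (s + m1 * s')%N)) = T (m1 * m2) n g.
Proof.
elim: n g => [|n IH] g /=; first by rewrite muln0 addn0.
rewrite -(sum_index m1 m2 (fun f => T (muln m1 m2) n (fun s => g (addn f s)))); apply: eq_bigr => d _.
rewrite T_sum; apply: eq_bigr => e _.
rewrite -(IH (fun z => g (d + m1 * e + z)%N)).
apply: T_eq => s _; apply: T_eq => s' _; congr g.
by rewrite mulnDr !addnA; congr addn; rewrite -!addnA; congr addn; rewrite addnC.
Qed.

Definition cnt (n m c i j : nat) : int :=
  T m n (fun s => ((i + c + s) %/ m == j)%N%:Z).

Lemma cnt_mul (n b M c i j : nat) : (i <= n)%N -> (0 < M)%N ->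
  \sum_(k < n.+1) cnt n (2*b).+1 b i k * cnt n M c k j =
  cnt n ((2*b).+1 * M) (b + (2*b).+1 * c) i j.
Proof.
move=> Hi HM.
rewrite /cnt.
under eq_bigr => k _ do rewrite mulrC -T_scal.
rewrite -T_sum.
rewrite -(T_mulm (2*b).+1 M n).
apply: T_eq => s Hs /=.
have Hx : ((i + b + s) %/ (2*b).+1 < n.+1)%N.
  rewrite ltn_divLR //.
  apply/ssrnat.ltP; move/ssrnat.leP: Hi; move/ssrnat.leP: Hs; rewrite -!multE -!plusE /=; nia.
rewrite (bigD1 (Ordinal Hx)) //= eqxx mulr1 big1 ?addr0; last first.
  move=> k Hk; apply/eqP; rewrite mulf_eq0; apply/orP; right.
  have -> : (((i + b + s) %/ (2 * b).+1)%N == k) = false.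
    by apply/negbTE; apply: contra Hk => /eqP Hk; apply/eqP; apply: val_inj; rewrite /= Hk.
  by [].
apply: T_eq => s' _; congr (Posz (nat_of_bool (_ == _))).
rewrite divnMA.
have -> : (i + (b + (2 * b).+1 * c) + (s + (2 * b).+1 * s') = (c + s') * (2*b).+1 + (i + b + s))%N.
  rewrite -!multE -!plusE; lia.
by rewrite divnMDl // [((c + s') + _)%N]addnC addnA.
Qed.

Lemma T1 (n : nat) (g : nat -> int) : T 1 n g = g 0%N.
Proof. by elim: n g => [|n IH] g //=; rewrite big_ord1 IH. Qed.

Lemma odd_pow (b r : nat) : exists c, ((2*b).+1 ^ r = (2*c).+1)%N.
Proof.
elim: r => [|r [c Hc]]; first by exists 0%N.
exists (b + (2*b).+1 * c)%N; rewrite expnS Hc.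
rewrite -!multE -!plusE; lia.
Qed.

Lemma half_odd (c : nat) : (((2*c).+1 - 1) %/ 2 = c)%N.
Proof. by rewrite subn1 /= mulKn. Qed.


Lemma countB (n b : nat) (i j : nat) :
  (carriesB_count n b i j)%:Z = cnt n (2*b).+1 b i j.
Proof.
by rewrite /carriesB_count (card_T _ _ (fun s => (i + b + s) %/ (2*b).+1 == j)%N).
Qed.

Lemma Ppow (n b r : nat) (i j : 'I_n.+1) :
  (carriesB_P n b ^+ r) i j =
  (cnt n ((2*b).+1 ^ r) (((2*b).+1 ^ r - 1) %/ 2) i j)%:~R / ((((2*b).+1 ^ r) ^ n)%N)%:R.
Proof.
elim: r i j => [|r IH] i j.
  rewrite expr0 mxE /cnt T1 expn0 exp1n divn1 addn0 addn0 divr1.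
  by [].
rewrite exprS mxE.
have [c Hc] := odd_pow b r.
rewrite expnS Hc.
have -> : (((2*b).+1 * (2*c).+1 - 1) %/ 2 = b + (2*b).+1 * c)%N.
  rewrite (_ : (2*b).+1 * (2*c).+1 = (2*(b + (2*b).+1*c)).+1)%N ?half_odd //.
  rewrite -!multE -!plusE; lia.
have Hi : (i <= n)%N by rewrite -ltnS.
rewrite -cnt_mul //.
under eq_bigr => k _ do rewrite IH Hc half_odd /carriesB_P mxE.
rewrite (big_morph (fun x : int => x%:~R : rat) (@intrD _) (mulr0z 1)).
rewrite expnMn natrM invfM mulr_suml; apply: eq_bigr => k _.
rewrite intrM -(countB n b i k).
rewrite mulrACA; congr (_ * _); congr (_ * _).
Qed.


Lemma int_rt : @ring_theory int (Posz 0) (Posz 1) intZmod.addz intRing.mulz (fun x y => intZmod.addz x (intZmod.oppz y)) intZmod.oppz eq.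
Proof.
split; [exact: (@add0r int)|exact: (@addrC int)|exact: (@addrA int)|exact: (@mul1r int)|exact: (@mulrC int)|exact: (@mulrA int)|exact: (@mulrDl int)|done|exact: (@subrr int)].
Qed.
Add Ring int_ring : int_rt.
Ltac iring := unfold Algebra.add, GRing.mul, Algebra.opp, Algebra.zero, GRing.one;
   cbn -[intRing.mulz intZmod.addz intZmod.oppz]; ring.

Lemma binomZ_neg (x : int) k : x < 0 -> binomZ x k = 0.
Proof. by case: x. Qed.

Lemma pascalZ (x : int) n : binomZ (x + 1) n.+1 = binomZ x n.+1 + binomZ x n.
Proof.
case: x => [a|[|a]] /=.
- by rewrite -PoszD addn1 /= binS PoszD.
- by [].
- by [].
Qed.

Lemma hockey (u : int) (m n : nat) :
  \sum_(d < m) binomZ (u - d%:Z) n = binomZ (u + 1) n.+1 - binomZ (u + 1 - m%:Z) n.+1.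
Proof.
elim: m => [|m IH]; first by rewrite big_ord0 subr0 subrr.
rewrite big_ord_recr /= IH.
have -> : u + 1 - m%:Z = (u - m%:Z) + 1 by iring.
rewrite [binomZ (u - m%:Z + 1) _]pascalZ.
have -> : u + 1 - (m.+1)%:Z = u - m%:Z by rewrite -addn1 PoszD; iring.
by rewrite opprD addrA subrK.
Qed.

Lemma tel (n : nat) (G : nat -> int) :
  \sum_(l < n.+1) (-1) ^+ l * ('C(n, l))%:R * (G l - G l.+1) =
  \sum_(l < n.+2) (-1) ^+ l * ('C(n.+1, l))%:R * G l.
Proof.
rewrite [in RHS]big_ord_recl /=.
under [X in _ = _ + X]eq_bigr => l _ do rewrite binS natrD mulrDr mulrDl.
rewrite big_split /= addrA.
under eq_bigr => l _ do rewrite mulrBr.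
rewrite sumrB.
congr (_ + _).
  rewrite [in RHS](big_ord_recr n) /= (bin_small (ltnSn n)) mulr0 mul0r addr0.
  rewrite [in LHS]big_ord_recl /= !bin0.
  by [].
under [in RHS]eq_bigr => l _ do rewrite exprS mulN1r !mulNr.
by rewrite sumrN.
Qed.

Definition F (n m : nat) (t : int) : int := T m n (fun s => (nat_of_bool (s%:Z <= t)%R)%:Z).

Lemma F_formula (m n : nat) (t : int) :
  F n m t = \sum_(l < n.+1) (-1) ^+ l * ('C(n, l))%:R * binomZ (t + n%:Z - l%:Z * m%:Z) n.
Proof.
elim: n t => [|n IH] t.
  rewrite /F /= big_ord1 expr0 bin0 !mul1r !addr0.
  by case: t => a //=; rewrite bin0.
transitivity (\sum_(d < m) F n m (t - d%:Z)).
  rewrite {1}/F /=; apply: eq_bigr => d _; rewrite /F; apply: T_eq => s _.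
  by rewrite PoszD lerBrDl.
under eq_bigr => d _ do rewrite IH.
rewrite exchange_big.
transitivity (\sum_(l < n.+1) (-1) ^+ l * ('C(n, l))%:R *
   ((fun l : nat => binomZ (t + (n.+1)%:Z - l%:Z * m%:Z) n.+1) l -
    (fun l : nat => binomZ (t + (n.+1)%:Z - l%:Z * m%:Z) n.+1) l.+1)); last first.
  exact: (tel n (fun l : nat => binomZ (t + (n.+1)%:Z - l%:Z * m%:Z) n.+1)).
apply eq_bigr => l _.
rewrite -mulr_sumr; congr (_ * _).
have E1 : forall k : nat, (k.+1)%:Z = k%:Z + 1 by move=> k; rewrite -addn1 PoszD.
have := hockey (t + n%:Z - (l : nat)%:Z * m%:Z) m n.
have -> : t + n%:Z - (l : nat)%:Z * m%:Z + 1 = t + (n.+1)%:Z - (l : nat)%:Z * m%:Z by rewrite E1; iring.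
have -> : t + (n.+1)%:Z - (l : nat)%:Z * m%:Z - m%:Z = t + (n.+1)%:Z - ((l : nat).+1)%:Z * m%:Z by rewrite !E1; iring.
move <-; apply eq_bigr => d _; congr binomZ; iring.
Qed.

Lemma cnt_formula (n c i j : nat) :
  cnt n (2*c).+1 c i j =
  \sum_(l < n.+2) (-1) ^+ l * ('C(n.+1, l))%:R *
     binomZ (n%:Z + (j%:Z - l%:Z) * ((2*c).+1)%:Z + c%:Z - i%:Z) n.
Proof.
set m := (2*c).+1.
have Hm : (0 < m)%N by [].
have Em : m = (2*c).+1 by [].
clearbody m.
transitivity (F n m ((j * m + c)%N%:Z - i%:Z) - F n m ((j * m+c)%N%:Z - (i + m)%N%:Z)).
  rewrite /F /cnt -T_sub; apply: T_eq => s _.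
  rewrite !lerBrDr -!PoszD !lez_nat.
  have -> : ((i + c + s) %/ m == j)%N = (s + i <= j * m + c)%N && ~~ (s + (i+m) <= j * m + c)%N.
    rewrite eqn_leq leq_divRL // -ltnS ltn_divLR //.
    have e1 : (i + c + s < j.+1 * m)%N = (s + i <= j * m + c)%N.
      apply/idP/idP => /ssrnat.leP H; apply/ssrnat.leP; move: H Em; rewrite -!multE -!plusE; lia.
    have e2 : (j * m <= i + c + s)%N = ~~ (s + (i+m) <= j * m + c)%N.
      rewrite -ltnNge; apply/idP/idP => /ssrnat.leP H; apply/ssrnat.leP; move: H Em; rewrite -!multE -!plusE; lia.
    by rewrite e1 e2.
  case: (leqP (s + i) (j * m + c)) => h1; case: (leqP (s + (i+m)) (j * m + c)) => h2 //=.
  exfalso; move: h1 h2; rewrite -!plusE -!multE => /ssrnat.ltP h1 /ssrnat.leP h2; lia.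
rewrite (F_formula m n) (F_formula m n) -sumrB.
pose H := fun l : nat => binomZ (n%:Z + (j%:Z - l%:Z) * m%:Z + c%:Z - i%:Z) n.
rewrite -(tel n H); apply eq_bigr => l _.
rewrite -mulrBr /H; congr (_ * (_ - _)); congr binomZ.
  rewrite PoszD PoszM; iring.
have E1 : forall k : nat, (k.+1)%:Z = k%:Z + 1 by move=> k; rewrite -addn1 PoszD.
rewrite !PoszD PoszM E1; iring.
Qed.

Lemma main2 (n b r : nat) (i j : 'I_n.+1) :
     (carriesB_P n b ^+ r) i j =
     ((2*b).+1 ^ (r * n))%:R^-1 *
       \sum_(l < n.+2)
         ((-1) ^+ l * ('C(n.+1, l))%:R *
          (binomZ ((n%:Z) + ((j%:Z) - (l%:Z)) * (((2*b).+1 ^ r)%N)%:Z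
                   + ((((2*b).+1 ^ r - 1) %/ 2)%N)%:Z - (i%:Z)) n)%:~R).
Proof.
rewrite Ppow; have [c Hc] := odd_pow b r.
rewrite expnM !Hc half_odd cnt_formula mulrC.
congr (_ * _).
rewrite (big_morph (fun x : int => x%:~R : rat) (@intrD _) (mulr0z 1)).
apply eq_bigr => l _.
by rewrite !intrM intr_sign natz.
Qed.

Theorem theorem4p2 (n b : nat) (hn : (1 <= n)%N) (hb : (1 <= b)%N) :
  (forall i j : 'I_n.+1,
     carriesB_P n b i j =
     ((2*b).+1 ^ n)%:R^-1 *
       \sum_(l < n.+2)
         ((-1) ^+ l * ('C(n.+1, l))%:R *
          (binomZ ((n%:Z) + ((j%:Z) - (l%:Z)) * ((2*b).+1)%:Z + (b%:Z) - (i%:Z)) n)%:~R))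
  /\
  (forall r : nat, (1 <= r)%N -> forall i j : 'I_n.+1,
     (carriesB_P n b ^+ r) i j =
     ((2*b).+1 ^ (r * n))%:R^-1 *
       \sum_(l < n.+2)
         ((-1) ^+ l * ('C(n.+1, l))%:R *
          (binomZ ((n%:Z) + ((j%:Z) - (l%:Z)) * (((2*b).+1 ^ r)%N)%:Z
                   + ((((2*b).+1 ^ r - 1) %/ 2)%N)%:Z - (i%:Z)) n)%:~R)).
Proof.
split.
  move=> i j.
  have := main2 n b 1 i j.
  by rewrite expr1 mul1n expn1 half_odd.
move=> r _ i j; exact: main2.
Qed.
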